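(* Let $h$ be a hospital and let $\mathrm{Ch}_h$ be the choice function that, given $X'\subseteq X_h$ (with $\mathrm{Ch}_h(\emptyset)=\emptyset$), sorts $X'$ in non-decreasing order of wage (ties broken by a fixed order) as $x^{(1)},\dots,x^{(|X'|)}$, starts with $Y=\emptyset$, for $i=1,\dots,|X'|-1$ adds $x^{(i)}$ to $Y$ if $w_h(Y\cup\{x^{(i)}\})<B_h$, then adds $x^{(|X'|)}$ to $Y$ and returns $Y$. Then for every $X'\subseteq X_h$, $w_h(\mathrm{Ch}_h(X'))<B_h+\overline{w}_h$.
   Context: Hospital $h$ has a finite set $X_h$ of contracts $x$ with wages $x_W$, $0<x_W\le B_h$, where $B_h>0$ is its budget. $w_h(Y)=\sum_{x\in Y}x_W$, $\overline{w}_h=\max_{x\in X_h}x_W$. *)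

(* Defs.v *)
From mathcomp Require Import all_boot all_order all_algebra.
Set Implicit Arguments. Unset Strict Implicit. Unset Printing Implicit Defensive.
Import Order.TTheory GRing.Theory Num.Theory.
Local Open Scope ring_scope.

Section Hospital.
Variables (R : realFieldType) (T : finType).
(* T = X_h (contracts of hospital h); w x = x_W (wage); B = B_h (budget);
   tb = a fixed injective tie-breaking key. *)
Variables (w : T -> R) (B : R) (tb : T -> nat).

Definition wsum (Y : seq T) : R := \sum_(y <- Y) w y.

Definition wage_le : rel T :=
  fun x y => (w x < w y) || ((w x == w y) && (tb x <= tb y)%N).

Fixpoint greedy (Y : seq T) (s : seq T) : seq T :=
  match s with
  | [::] => Y
  | [:: x] => x :: Y
  | x :: s' => greedy (if wsum (x :: Y) < B then x :: Y else Y) s'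
  end.

Definition Ch (X' : {set T}) : {set T} :=
  [set x in greedy [::] (sort wage_le (enum X'))].

Definition wset (Y : {set T}) : R := \sum_(x in Y) w x.

(* \overline{w}_h = max wage (0 if X_h is empty) *)
Definition wmax : R := \big[Num.max/0]_(x : T) w x.
End Hospital.

(* Main.v *)
Require Import Defs.
From mathcomp Require Import all_boot all_order all_algebra.
Import Order.TTheory GRing.Theory Num.Theory.
Local Open Scope ring_scope.

Section H.
Variables (R : realFieldType) (T : finType) (w : T -> R) (B : R).
Hypothesis w_pos : forall x, 0 < w x.

Lemma wmax_ge x : w x <= wmax w.
Proof.
rewrite /wmax (bigD1 x) //=; by rewrite le_max lexx.
Qed.

Lemma wmax_ge0 : 0 <= wmax w.
Proof.
rewrite /wmax; elim/big_ind: _ => //= [a b ha hb|a _]; [by rewrite le_max ha|exact: ltW].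
Qed.

Lemma undup_le (s : seq T) : \sum_(y <- undup s) w y <= \sum_(y <- s) w y.
Proof.
elim: s => [|x s IH] //=; rewrite big_cons.
case: (x \in s) => //=; last by rewrite big_cons lerD2l.
by rewrite -[X in X <= _]add0r lerD // ltW.
Qed.

Lemma wset_le (s : seq T) : wset w [set x in s] <= wsum w s.
Proof.
rewrite /wset /wsum.
have -> : \sum_(x in [set x in s]) w x = \sum_(x <- undup s) w x.
  rewrite (big_uniq _ (undup_uniq s)); apply: eq_bigl => x.
  by rewrite inE mem_undup.
exact: undup_le.
Qed.

Lemma greedy_le (Y s : seq T) : wsum w Y < B ->
  wsum w (greedy w B Y s) < B + wmax w.
Proof.
elim: s Y => [|x s IH] Y HY /=.
  by rewrite -[X in X < _]addr0 ltr_leD // wmax_ge0.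
case: s IH => [|y s] IH.
  by rewrite /wsum big_cons -/(wsum w Y) addrC ltr_leD // wmax_ge.
apply: IH; by case: ifP.
Qed.
End H.

Theorem lemma6 (R : realFieldType) (T : finType) (w : T -> R) (B : R)
  (tb : T -> nat) (tb_inj : injective tb)
  (B_pos : 0 < B) (w_pos : forall x, 0 < w x) (w_le_B : forall x, w x <= B)
  (X' : {set T}) :
  wset w (Ch w B tb X') < B + wmax w.
Proof.
rewrite /Ch; set s := greedy _ _ _ _; have H := @wset_le R T w w_pos s; apply: (le_lt_trans H).
apply: (@greedy_le R T w B w_pos).
by rewrite /wsum big_nil.
Qed.
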